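(* Let $n,t,k$ be integers with $n\geq 2t\geq 2$ and $k\geq 2$, and let $u$ be a word of length $t$ over $\Sigma_k=\{0,1,\ldots,k-1\}$. Then \[B_k(n,u)\leq A_k(n-2t,0^t),\] where $0^t$ denotes the word consisting of $t$ zeros.
   Context: A border of a word $w$ is a non-empty word that is both a proper prefix and a proper suffix of $w$. A word $w$ is closed by a word $u$ if $u$ is a border of $w$ and $u$ occurs exactly twice in $w$ as a factor (overlapping occurrences counted). $B_k(n,u)$ denotes the number of words of length $n$ over $\Sigma_k$ that are closed by $u$. $A_k(m,v)$ denotes the number of words of length $m$ over $\Sigma_k$ that do not contain $v$ as a factor (for $m=0$ the empty word is counted). *)

(* Defs.v *)
From mathcomp Require Import all_boot.
Set Implicit Arguments. Unset Strict Implicit. Unset Printing Implicit Defensive.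

Definition occ {T : eqType} (u w : seq T) : nat :=
  count (fun i => take (size u) (drop i w) == u) (iota 0 (size w - size u).+1).
(* starting positions i = 0..|w|-|u|; if |u| > |w| the single test fails
   since take returns a shorter word *)

Definition is_border {T : eqType} (u w : seq T) : bool :=
  [&& 0 < size u, size u < size w, prefix u w & suffix u w].

Definition closed_by {T : eqType} (u w : seq T) : bool :=
  is_border u w && (occ u w == 2).

Definition has_factor {T : eqType} (v w : seq T) : bool := infix v w.

Definition B (k n : nat) (u : seq 'I_k) : nat :=
  #|[set w : n.-tuple 'I_k | closed_by u w]|.

Definition A (k m : nat) (v : seq 'I_k) : nat :=
  #|[set w : m.-tuple 'I_k | ~~ has_factor v w]|.

(* Main.v *)
Require Import Defs.
From mathcomp Require Import all_boot zify.
Set Implicit Arguments. Unset Strict Implicit. Unset Printing Implicit Defensive.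
Fixpoint lcp {T : eqType} (a b : seq T) : nat :=
  match a, b with
  | x :: a', y :: b' => if x == y then (lcp a' b').+1 else 0
  | _, _ => 0 end.

Lemma lcp_take {T : eqType} (a b : seq T) : take (lcp a b) a = take (lcp a b) b.
Proof.
elim: a b => [|x a IH] [|y b] //=; case: eqP => // -> /=; by rewrite IH.
Qed.

Lemma lcp_le {T : eqType} (a b : seq T) : lcp a b <= size b.
Proof. elim: a b => [|x a IH] [|y b] //=; case: eqP => // _; exact: IH. Qed.

Lemma lcp_lea {T : eqType} (a b : seq T) : lcp a b <= size a.
Proof. elim: a b => [|x a IH] [|y b] //=; case: eqP => // _; exact: IH. Qed.

Lemma lcp_neq {T : eqType} (z : T) (a b : seq T) : lcp a b < size a -> lcp a b < size b ->
  nth z a (lcp a b) != nth z b (lcp a b).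
Proof.
elim: a b => [|x a IH] [|y b] //=; case: eqP => [_|/eqP] //=; rewrite !ltnS; exact: IH.
Qed.

Definition sg {T : eqType} (z : T) (v : seq T) j (c : T) :=
  if c == nth z v j then z else if c == z then nth z v j else c.

Lemma sg_inj {T : eqType} (z : T) v j : injective (sg z v j).
Proof.
move=> a b; rewrite /sg.
by do ! (case: eqP => //; try move=> ->; try move=> <-); move=> *; subst.
Qed.

Lemma sg_nz {T : eqType} (z : T) v j c : c != nth z v j -> sg z v j c != z.
Proof.
move=> H; rewrite /sg (negbTE H); case: (c =P z) => [E|/eqP //].
by rewrite E in H; rewrite eq_sym.
Qed.

Fixpoint phi {T : eqType} (z : T) (v : seq T) (f : nat) (w : seq T) : seq T :=
  match f with
  | 0 => w
  | f'.+1 =>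
    if size w < size v then w else
    match drop (lcp w v) w with
    | c :: r => nseq (lcp w v) z ++ sg z v (lcp w v) c :: phi z v f' r
    | [::] => w end end.

Lemma phi_size {T : eqType} (z : T) v f w : size (phi z v f w) = size w.
Proof.
elim: f w => [|f IH] w //=; case: ifP => // _.
have := size_drop (lcp w v) w; case: (drop _ w) => //= c r.
rewrite size_cat size_nseq /= IH => H; have := lcp_lea w v; lia.
Qed.

Lemma nseq_cons_inj {T : eqType} (z : T) j1 j2 a1 a2 (p1 p2 : seq T) :
  a1 != z -> a2 != z -> nseq j1 z ++ a1 :: p1 = nseq j2 z ++ a2 :: p2 ->
  [/\ j1 = j2, a1 = a2 & p1 = p2].
Proof.
move=> h1 h2; elim: j1 j2 => [|j1 IH] [|j2] /=.
- by case=> -> ->.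
- by case=> E; rewrite E eqxx in h1.
- by case=> E; rewrite -E eqxx in h2.
- by case=> /IH [-> -> ->].
Qed.

Lemma noprefix0 {T : eqType} (z : T) j t a (p : seq T) : j < t -> a != z ->
  ~~ prefix (nseq t z) (nseq j z ++ a :: p).
Proof.
move=> + ha; elim: j t => [|j IH] [|t] //=.
- by rewrite eq_sym (negbTE ha).
- rewrite ltnS eqxx /=; exact: IH.
Qed.

Lemma noinfix0 {T : eqType} (z : T) j t a (p : seq T) : j < t -> a != z ->
  ~~ infix (nseq t z) p -> ~~ infix (nseq t z) (nseq j z ++ a :: p).
Proof.
move=> hj ha hp; elim: j hj => [|j IH] hj.
- rewrite /= negb_or hp andbT. exact: (noprefix0 (j:=0)).
- rewrite cat_cons infix_consl negb_or; apply/andP; split.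
  + exact: (noprefix0 (j:=j.+1)).
  + exact: IH (ltnW hj).
Qed.

Lemma decomp {T : eqType} (w v : seq T) c r : drop (lcp w v) w = c :: r ->
  w = take (lcp w v) v ++ c :: r.
Proof. by move=> <-; rewrite -lcp_take cat_take_drop. Qed.

Lemma step {T : eqType} (z : T) (v w : seq T) : size v <= size w -> ~~ infix v w ->
  lcp w v < size v /\ exists c r, drop (lcp w v) w = c :: r /\ c != nth z v (lcp w v).
Proof.
move=> hs hinf.
have hj : lcp w v < size v.
  rewrite ltn_neqAle lcp_le andbT; apply/negP => /eqP E.
  move: hinf; rewrite prefixW //= prefixE -{1}E lcp_take E take_size eqxx //.
split=> //; exists (nth z w (lcp w v)), (drop (lcp w v).+1 w); split.
  by rewrite (drop_nth z) //; apply: leq_trans hs.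
by apply: lcp_neq => //; apply: leq_trans hs.
Qed.

Lemma infix_drop_w {T : eqType} (v w : seq T) j : infix v (drop j w) -> infix v w.
Proof. move=> h; apply: infix_trans h (infix_drop _ _). Qed.

Lemma phi_avoid {T : eqType} (z : T) (v : seq T) f w : 0 < size v -> size w <= f ->
  ~~ infix v w -> ~~ infix (nseq (size v) z) (phi z v f w).
Proof.
move=> hv; elim: f w => [|f IH] w hw hinf /=.
  by move: hw; rewrite leqn0 size_eq0 => /eqP ->; rewrite infixs0; case: (size v) hv.
case: ltnP => hs.
  apply/negP => /size_infix; rewrite size_nseq; lia.
have [hj [c [r [hd hc]]]] := step z hs hinf.
rewrite hd; apply: noinfix0 => //; first exact: sg_nz.
apply: IH.
  have := size_drop (lcp w v) w; rewrite hd /=; lia.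
apply/negP => h; move/negP: hinf; apply; apply: (@infix_drop_w _ _ _ (lcp w v)).
rewrite hd; apply: infix_trans h (suffix_infix [:: c] r).
Qed.

Lemma phi_inj {T : eqType} (z : T) (v : seq T) f w1 w2 : size w1 <= f -> size w1 = size w2 ->
  ~~ infix v w1 -> ~~ infix v w2 -> phi z v f w1 = phi z v f w2 -> w1 = w2.
Proof.
elim: f w1 w2 => [|f IH] w1 w2 //= hw hs h1 h2.
rewrite -hs; case: ltnP => hl //.
have [hj1 [c1 [r1 [hd1 hc1]]]] := step z hl h1.
have hl2 : size v <= size w2 by rewrite -hs.
have [hj2 [c2 [r2 [hd2 hc2]]]] := step z hl2 h2.
rewrite hd1 hd2 => /nseq_cons_inj [||Ej Ec Er]; try exact: sg_nz.
rewrite Ej in Ec; have Ec' := sg_inj Ec.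
have s1 := size_drop (lcp w1 v) w1; have s2 := size_drop (lcp w2 v) w2.
rewrite hd1 /= in s1; rewrite hd2 /= in s2.
have Er' : r1 = r2.
  apply: IH Er.
  - have := lcp_lea w1 v; lia.
  - lia.
  - apply/negP => h; move/negP: h1; apply; apply: (@infix_drop_w _ _ _ (lcp w1 v)).
    rewrite hd1; apply: infix_trans h (suffix_infix [:: c1] r1).
  - apply/negP => h; move/negP: h2; apply; apply: (@infix_drop_w _ _ _ (lcp w2 v)).
    rewrite hd2; apply: infix_trans h (suffix_infix [:: c2] r2).
by rewrite (decomp hd1) (decomp hd2) Ej Ec' Er'.
Qed.

Lemma card_le {T : finType} (x0 : T) n m (P Q : pred (seq T)) (F : seq T -> seq T) :
 (forall w, size w = n -> P w -> size (F w) = m /\ Q (F w)) ->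
 (forall w1 w2, size w1 = n -> size w2 = n -> P w1 -> P w2 -> F w1 = F w2 -> w1 = w2) ->
 #|[set w : n.-tuple T | P w]| <= #|[set w : m.-tuple T | Q w]|.
Proof.
move=> HF Hinj.
pose G := fun w : n.-tuple T => (insubd (nseq_tuple m x0) (F w) : m.-tuple T).
have GE : forall w : n.-tuple T, P w -> val (G w) = F w.
  move=> w Pw; rewrite /G val_insubd.
  by have [-> _] := HF w (size_tuple w) Pw; rewrite eqxx.
rewrite -(card_in_imset (f := G)).
  apply: subset_leq_card; apply/subsetP => y /imsetP [w]; rewrite inE => Pw ->.
  by rewrite inE GE //; have [_ ->] := HF w (size_tuple w) Pw.
move=> w1 w2; rewrite !inE => P1 P2 E; apply: val_inj.
apply: Hinj; rewrite ?size_tuple //.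
by rewrite -GE // -GE // E.
Qed.

Lemma closed_split {T : eqType} (u w : seq T) n t : size u = t -> size w = n -> 2 * t <= n ->
  closed_by u w -> w = u ++ take (n - 2 * t) (drop t w) ++ u.
Proof.
move=> hu hw hn /andP [/and4P [_ _ hp hsf] _].
move: hp hsf; rewrite prefixE suffixE hu hw => /eqP hp /eqP hsf.
have e1 : drop t w = take (n - 2 * t) (drop t w) ++ drop (n - t) w.
  rewrite -{1}(cat_take_drop (n - 2 * t) (drop t w)) drop_drop.
  by rewrite (_ : n - 2 * t + t = n - t) //; lia.
rewrite -{1}(cat_take_drop t w) hp; congr (_ ++ _); by rewrite {1}e1 hsf.
Qed.

Lemma closed_avoid {T : eqType} (u w : seq T) n t : size u = t -> size w = n -> 2 * t <= n ->
  0 < t -> closed_by u w -> ~~ infix u (take (n - 2 * t) (drop t w)).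
Proof.
move=> hu hw hn ht hc; have E := closed_split hu hw hn hc.
move: hc => /andP [_ /eqP hocc]; apply/negP => /infixP [s [s' Em]].
rewrite Em in E.
have hsz : size s + t + size s' = n - 2 * t.
  have := congr1 size Em; rewrite size_take size_drop hw !size_cat hu.
  case: ltnP; lia.
pose a := fun i => take (size u) (drop i w) == u.
have : size [:: 0; t + size s; n - t] <= count a (iota 0 (size w - size u).+1).
  rewrite -size_filter; apply: uniq_leq_size.
    rewrite /= !inE negb_or; apply/and3P; split; apply/eqP; lia.
  have key : forall x y, w = x ++ u ++ y -> a (size x).
    move=> x y Ew; rewrite /a Ew (drop_size_cat _ (erefl (size x))).
    by rewrite (take_size_cat _ (erefl (size u))).
  move=> i; rewrite mem_filter mem_iota !inE hw hu => /or3P [] /eqP ->; apply/andP; split.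
  - by apply: (key [::] ((s ++ u ++ s') ++ u)).
  - lia.
  - have -> : t + size s = size (u ++ s) by rewrite size_cat hu.
    by apply: (key _ (s' ++ u)); rewrite E !catA.
  - lia.
  - have -> : n - t = size (u ++ s ++ u ++ s') by rewrite !size_cat hu; lia.
    by apply: (key _ [::]); rewrite E cats0 !catA.
  - lia.
by rewrite /occ in hocc; rewrite hocc.
Qed.

Theorem lemma6 (n t k : nat) (hk : 2 <= k) (ht : 1 <= t) (hn : 2 * t <= n)
  (u : seq 'I_k) (hu : size u = t) :
  B n u <= A (n - 2 * t) (nseq t (Ordinal (ltnW hk : 0 < k))).
Proof.
set z := Ordinal (ltnW hk : 0 < k).
apply: (@leq_trans #|[set w : (n - 2 * t).-tuple 'I_k | ~~ infix u w]|).
  apply: (@card_le _ z n (n - 2 * t) (closed_by u) (fun s => ~~ infix u s)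
            (fun w => take (n - 2 * t) (drop t w))).
    move=> w hw hc; split; last exact: closed_avoid hu hw hn ht hc.
    rewrite size_take size_drop hw; case: ltnP => //; lia.
  move=> w1 w2 h1 h2 c1 c2 E.
  by rewrite (closed_split hu h1 hn c1) (closed_split hu h2 hn c2) E.
apply: (@card_le _ z (n - 2 * t) (n - 2 * t) (fun s => ~~ infix u s)
          (fun s => ~~ has_factor (nseq t z) s) (phi z u (n - 2 * t))).
  move=> w hw hav; split; first by rewrite phi_size.
  rewrite /has_factor -hu; apply: phi_avoid => //; rewrite ?hu ?hw //.
move=> w1 w2 h1 h2 a1 a2 E; apply: phi_inj E => //; rewrite ?h1 ?h2 //.
Qed.
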